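(* There is a constant $C>0$ such that for all $a\neq b$ in $\mathbb{R}/\tau\mathbb{Z}$ and all $\phi\in\mathbb{R}$, $$\sum_{n\in Z(a,b)}w(n-\phi)^{3/2}\le C\,\frac{\sum_{n\in Z(a,b)}w(n-\phi)^{5/2}}{\sum_{n\in Z(a,b)}w(n-\phi)}.$$
   Context: $\tau=\frac{1+\sqrt5}{2}$; $w(x)=\frac1\pi\left(\tan^{-1}(x+1)-\tan^{-1}(x)\right)$. For real $x$, $x\bmod\tau$ is its image in $\mathbb{R}/\tau\mathbb{Z}$. For $a,b\in\mathbb{R}/\tau\mathbb{Z}$, $(a,b)$ denotes the open arc from $a$ to $b$ in the positive direction, and $Z(a,b)$ is the set of integers $n$ with $n\bmod\tau\in(a,b)$. The constant $C$ is independent of all variables. *)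

(* Defs.v *)
From HB Require Import structures.
From mathcomp Require Import all_boot all_order all_algebra.
From mathcomp Require Import all_classical all_reals all_analysis.
Set Implicit Arguments. Unset Strict Implicit. Unset Printing Implicit Defensive.
Import Order.TTheory GRing.Theory Num.Theory.
Local Open Scope ring_scope.
Local Open Scope classical_set_scope.

Section Defs.
Variable R : realType.

Definition tau : R := (1 + Num.sqrt 5) / 2.

Definition w (x : R) : R := (atan (x + 1) - atan x) / pi.

Definition modtau (x : R) : R := x - tau * (Num.floor (x / tau))%:~R.

(* x mod tau lies on the open arc from a to b (positive direction) in R/tauZ:
   its positive-direction offset from a is strictly between 0 and that of b. *)
Definition in_arc (a b x : R) : Prop := 0 < modtau (x - a) < modtau (b - a).

Definition Zab (a b : R) : set int := [set n : int | in_arc a b n%:~R].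

Definition Wsum (a b phi p : R) : \bar R :=
  (\esum_(n in Zab a b) ((w (n%:~R - phi)) `^ p)%:E)%E.

End Defs.

(* Main.v *)
Require Import Defs.
From mathcomp Require Import all_boot all_order all_algebra.
From mathcomp Require Import all_classical all_reals all_analysis.
From mathcomp Require Import lra ring zify.
Import Order.TTheory GRing.Theory Num.Theory numFieldTopology.Exports numFieldNormedType.Exports.
Local Open Scope classical_set_scope.
Local Open Scope ring_scope.
Lemma norm_ne0 (h j : int) : h != 0 -> h ^+ 2 - h * j - j ^+ 2 != 0.
Proof.
move=> h0; apply/negP => /eqP E.
have E2 : (2 * h - j) ^+ 2 = 5 * j ^+ 2.
  apply/eqP; rewrite -subr_eq0.
  have -> : (2 * h - j) ^+ 2 - 5 * j ^+ 2 = 4 * (h ^+ 2 - h * j - j ^+ 2) by ring.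
  by rewrite E mulr0.
have j0 : j != 0.
  apply/negP => /eqP j0; move: E; rewrite j0 mulr0 expr0n /= subr0 subr0 => /eqP.
  by rewrite sqrf_eq0 (negPf h0).
have N : (`|(2 * h - j)%R| ^ 2 = 5 * `|j|%N ^ 2)%N.
  by rewrite -!abszX E2 abszM.
have y0 : (0 < `|j|)%N by rewrite absz_gt0.
have x0 : (0 < `|(2 * h - j)%R|)%N.
  rewrite lt0n; apply/negP => /eqP x0; move: N; rewrite x0 => /esym/eqP.
  move=> /eqP; nia.
have := congr1 (logn 5) N.
rewrite lognM // ?expn_gt0 ?y0 // !lognX (logn_prime 5 (isT : prime 5)) eqxx.
lia.
Qed.
Section S.
Variable R : realType.
Local Notation tau := (tau R).
Local Notation s5 := (Num.sqrt (5 : R)).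

Lemma s5_sq : s5 ^+ 2 = 5. Proof. by rewrite sqr_sqrtr. Qed.
Lemma s5_bounds : 2 < s5 < 9/4.
Proof.
have h0 := sqrtr_ge0 (5:R). have h := s5_sq.
apply/andP; split; nra.
Qed.
Lemma tau_sq : tau ^+ 2 = tau + 1.
Proof. rewrite /Defs.tau. have h := s5_sq. rewrite expr2 in h *. nra. Qed.
Lemma tau_bounds : 3/2 < tau < 13/8.
Proof. rewrite /Defs.tau. have /andP[h1 h2] := s5_bounds. apply/andP; split; lra. Qed.
Lemma tau_s5 : 2 * tau - 1 = s5.
Proof. rewrite /Defs.tau; by field. Qed.

Lemma inv_le (a b : R) : 0 < a -> a <= b -> b^-1 <= a^-1.
Proof. move=> a0 ab. rewrite lef_pV2 ?posrE //; lra. Qed.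

Lemma w_bounds (x : R) :
  (2 * pi * (1 + (x + 1/2) ^+ 2))^-1 <= w x <= (pi * (1 + (x + 1/2) ^+ 2) / 2)^-1.
Proof.
have hx : x < x + 1 by lra.
have hc : {within `[x, x+1], continuous (@atan R)}.
  by apply/continuous_subspaceT => ?; exact: continuous_atan.
have [c /[!in_itv] /= /andP[c1 c2] e] : exists2 c, c \in `]x, x+1[ & atan (x+1) - atan x = (1 + c^+2)^-1 * (x + 1 - x).
  exact: (@MVT R atan (fun y => (1 + y ^+ 2)^-1) x (x+1) hx (fun y _ => is_derive1_atan y) hc).
rewrite /w e (_ : x + 1 - x = 1); last lra.
have pi0 := @pi_gt0 R.
set t := x + 1/2.
have D : (c - t) ^+ 2 <= 1/4.
  have h1 : 0 < c - t + 1/2 by rewrite /t; lra.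
  have h2 : 0 < t + 1/2 - c by rewrite /t; lra.
  have := mulr_gt0 h1 h2; rewrite expr2; lra.
have A : 1 + c ^+ 2 <= 2 * (1 + t ^+ 2).
  have := sqr_ge0 (2 * t - c); rewrite !expr2 in D *; nra.
have B : 1 + t ^+ 2 <= 2 * (1 + c ^+ 2).
  have := sqr_ge0 (2 * c - t); rewrite !expr2 in D *; nra.
have c0 : 0 < 1 + c ^+ 2 by nra.
have t0 : 0 < 1 + t ^+ 2 by nra.
have -> : (1 + c ^+ 2)^-1 * 1 / pi = (pi * (1 + c^+2))^-1.
  by rewrite mulr1 -invfM mulrC.
apply/andP; split; apply: inv_le; nra.
Qed.

Local Notation alpha := (tau - 1).

Lemma alpha_tau : alpha * tau = 1.
Proof. have := tau_sq; rewrite expr2 => h. lra. Qed.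

Lemma norm_ident (h j : R) : (h - j * tau) * (h + j * alpha) = h ^+ 2 - h * j - j ^+ 2.
Proof. have := tau_sq; rewrite !expr2 => t2. nra. Qed.

Lemma norm_ge1 (h j : int) : h != 0 ->
  1 <= `|(h%:~R - j%:~R * tau) * (h%:~R + j%:~R * alpha)| :> R.
Proof.
move=> h0; rewrite norm_ident.
have -> : (h%:~R ^+ 2 - h%:~R * j%:~R - j%:~R ^+ 2 : R) = (h ^+ 2 - h * j - j ^+ 2)%:~R.
  by rewrite intrB intrB !intrM !expr2.
rewrite -intr_norm ler1z.
have := norm_ne0 h j h0. set z := (_ - _). lia.
Qed.

Lemma gap_lemma (l : R) (h j : int) : 0 < l -> l <= tau -> h != 0 ->
  `|h%:~R - j%:~R * tau| < l -> 1 <= 3 * l * `|h%:~R|.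
Proof.
move=> l0 lt h0 el.
have N := norm_ge1 h j h0.
rewrite normrM in N.
set e := h%:~R - j%:~R * tau in el N.
have H1 : 1 <= `|h%:~R : R| by rewrite -intr_norm ler1z; lia.
have /andP[t1 t2] := tau_bounds.
have jE : j%:~R = (h%:~R - e) * alpha.
  rewrite /e (_ : (h%:~R - (h%:~R - j%:~R * tau)) * alpha = j%:~R * (alpha * tau)).
    by rewrite alpha_tau mulr1.
  ring.
have eta : h%:~R + j%:~R * alpha = h%:~R + (h%:~R - e) * alpha ^+ 2 :> R.
  by rewrite jE expr2; ring.
have a2 : 0 < alpha ^+ 2 < 1/2.
  have := tau_sq; rewrite !expr2 => t2'. apply/andP; split; nra.
have en : `|h%:~R + j%:~R * alpha| <= 2 * `|h%:~R| + 1 :> R.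
  rewrite eta.
  have /andP[a0 a1] := a2.
  apply: (le_trans (ler_normD _ _)).
  rewrite normrM (ger0_norm (ltW a0)).
  have := ler_normB (h%:~R : R) e.
  have e0 := normr_ge0 e.
  nra.
have e0 := normr_ge0 e.
nra.
Qed.

Lemma floor_bounds (x : R) : (Num.floor x)%:~R <= x < (Num.floor x)%:~R + 1.
Proof. by have := floor_itv x; rewrite intrD. Qed.

Lemma box_lemma (u0 v0 : R) : exists h j : int,
  u0 < h%:~R - j%:~R * tau <= u0 + 1 /\ v0 < h%:~R + j%:~R * alpha <= v0 + 4.
Proof.
have /andP[s1 s2] := s5_bounds.
have s0 : 0 < Num.sqrt (5:R) by lra.
set y := (v0 - u0) / Num.sqrt 5.
have yE : y * Num.sqrt 5 = v0 - u0 by rewrite /y divfK // gt_eqF.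
set j := Num.floor y + 1.
have /andP[f1 f2] := floor_bounds y.
have J : v0 - u0 < j%:~R * Num.sqrt 5 <= v0 - u0 + Num.sqrt 5.
  rewrite /j intrD; apply/andP; split; nra.
set h := Num.floor (u0 + j%:~R * tau) + 1.
have /andP[g1 g2] := floor_bounds (u0 + j%:~R * tau).
have H : u0 < h%:~R - j%:~R * tau <= u0 + 1.
  rewrite /h intrD; apply/andP; split; lra.
exists h, j; split => //.
have -> : h%:~R + j%:~R * alpha = (h%:~R - j%:~R * tau) + j%:~R * (2 * tau - 1) :> R by ring.
rewrite tau_s5. apply/andP; split; lra.
Qed.

Lemma scale_lemma (k : nat) (h j : int) : exists h' j' : int,
  h'%:~R - j'%:~R * tau = (h%:~R - j%:~R * tau) * alpha ^+ k /\
  h'%:~R + j'%:~R * alpha = (h%:~R + j%:~R * alpha) * (- tau) ^+ k.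
Proof.
elim: k => [|k [h' [j' [E1 E2]]]]; first by exists h, j; rewrite !expr0 !mulr1.
exists (- h' - j'), (- h'); rewrite !exprS.
have at1 := alpha_tau.
rewrite !intrB !intrN; split.
- have -> : ((h%:~R - j%:~R * tau) * (alpha * alpha ^+ k) : R) = ((h%:~R - j%:~R * tau) * alpha ^+ k) * alpha by ring.
  rewrite -E1. 
  have -> : (- h'%:~R - j'%:~R - - h'%:~R * tau : R) = h'%:~R * (tau - 1) - j'%:~R by ring.
  have -> : ((h'%:~R - j'%:~R * tau) * alpha : R) = h'%:~R * alpha - j'%:~R * (alpha * tau) by ring.
  by rewrite at1 mulr1.
- have -> : ((h%:~R + j%:~R * alpha) * (- tau * (- tau) ^+ k) : R) = ((h%:~R + j%:~R * alpha) * (- tau) ^+ k) * - tau by ring.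
  rewrite -E2.
  have -> : ((h'%:~R + j'%:~R * alpha) * - tau : R) = - h'%:~R * tau - j'%:~R * (alpha * tau) by ring.
  rewrite at1 mulr1; ring.
Qed.

Lemma tau_pow_ge (k : nat) : 1 + k%:R / 2 <= tau ^+ k.
Proof.
have /andP[t1 t2] := tau_bounds.
elim: k => [|k IH]; first by rewrite expr0; lra.
rewrite exprS -natr1.
have : 1 <= tau ^+ k by apply: exprn_ege1; lra.
nra.
Qed.

Lemma sign_cases (k : nat) : (-1 : R) ^+ k = 1 \/ (-1 : R) ^+ k = -1.
Proof.
elim: k => [|k [E|E]]; rewrite ?expr0; [by left| |]; rewrite exprS E; [right|left]; ring.
Qed.

Lemma cover_core (l c : R) : 0 < l -> l < tau -> exists h j : int,
  c < h%:~R - j%:~R * tau < c + l /\ 0 < h%:~R + j%:~R * alpha <= 16 / l.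
Proof.
move=> l0 lt.
have /andP[t1 t2] := tau_bounds.
pose P := fun k : nat => 2 <= tau ^+ k * l.
have exP : exists k, P k.
  exists (Num.Def.archi_bound (4 / l)).
  have := archi_boundP (ltW (divr_gt0 (ltr0Sn _ 3) l0)).
  set n := Num.Def.archi_bound _ => hn.
  have := tau_pow_ge n.
  rewrite /P; move: hn; rewrite ltr_pdivrMr // => hn. nra.
case: (ex_minnP exP) => k Pk Pmin.
have k0 : (0 < k)%N.
  rewrite lt0n; apply/negP => /eqP k0; move: Pk; rewrite k0 /P expr0 mul1r; lra.
have Pk1 : tau ^+ k * l < 2 * tau.
  have : ~~ P k.-1 by apply/negP => /Pmin; lia.
  rewrite /P -ltNge -(prednK k0) exprS => h1.
  rewrite -mulrA; nra.
set Q := tau ^+ k.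
have Q0 : 0 < Q by rewrite /Q exprn_gt0 //; lra.
have Ql : 2 <= Q * l by exact: Pk.
have aQ : alpha ^+ k * Q = 1 by rewrite /Q -exprMn alpha_tau expr1n.
have tQ : (- tau) ^+ k = (-1) ^+ k * Q by rewrite /Q -exprMn mulN1r.
set z := 8 / l.
have zl : z * l = 8 by rewrite /z divfK // gt_eqF.
set zq := z / Q.
have zqQ : zq * Q = z by rewrite /zq divfK // gt_eqF.
set sg := (-1 : R) ^+ k.
set v0 := sg * zq - 2.
have [h' [j' [/andP[U1 U2] /andP[V1 V2]]]] := box_lemma (Q * c) v0.
have [h [j [E1 E2]]] := scale_lemma k h' j'.
exists h, j.
set u' := h'%:~R - j'%:~R * tau in U1 U2 E1.
set v' := h'%:~R + j'%:~R * alpha in V1 V2 E2.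
set u := h%:~R - j%:~R * tau in E1 *.
set v := h%:~R + j%:~R * alpha in E2 *.
have uQ : u * Q = u' by rewrite E1 -mulrA aQ mulr1.
have vE : v = v' * sg * Q by rewrite E2 tQ mulrA.
have l16 : 16 / l = 2 * z by rewrite /z; field; rewrite gt_eqF.
rewrite l16.
split.
- apply/andP; split; nra.
- have Qz : 2 * Q < z.
    have Ql4 : Q * l < 4 by have : Q * l < 2 * tau := Pk1; lra.
    nra.
  rewrite vE /v0 in V1 V2 *.
  case: (sign_cases k) => E; rewrite -/sg in E; rewrite E in V1 V2 *.
  + rewrite mulr1 in V1 V2 *; apply/andP; split; nra.
  + rewrite mulrN1 in V1 V2 *; apply/andP; split; nra.
Qed.

Lemma tau_gt0 : 0 < tau.
Proof. by have /andP[t1 _] := tau_bounds; lra. Qed.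

Lemma modtau_bounds (x : R) : 0 <= modtau x < tau.
Proof.
rewrite /modtau.
have t0 := tau_gt0.
have /andP[f1 f2] := floor_bounds (x / tau).
have xE : x / tau * tau = x by rewrite divfK // gt_eqF.
apply/andP; split; nra.
Qed.

Lemma Zab_E (a b : R) (n : int) :
  Zab a b n <-> exists m : int, 0 < n%:~R - a - m%:~R * tau < modtau (b - a).
Proof.
have t0 := tau_gt0.
have /andP[_ lt] := modtau_bounds (b - a).
rewrite /Zab /in_arc /=; split.
- move=> H; exists (Num.floor ((n%:~R - a) / tau)).
  by move: H; rewrite /modtau mulrC.
- move=> [m /andP[m1 m2]].
  rewrite /modtau.
  have -> : Num.floor ((n%:~R - a) / tau) = m.
    apply: floor_def; rewrite intrD.
    rewrite ler_pdivlMr // ltr_pdivrMr //; apply/andP; split; nra.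
  by rewrite mulrC -/(modtau (b - a)); apply/andP; split.
Qed.

Lemma Z_gap (a b : R) (n1 n2 : int) : Zab a b n1 -> Zab a b n2 -> n1 != n2 ->
  1 <= 3 * modtau (b - a) * `|n1%:~R - n2%:~R| /\ 1 <= `|n1%:~R - n2%:~R : R|.
Proof.
move=> /Zab_E [m1 /andP[a1 a2]] /Zab_E [m2 /andP[b1 b2]] ne.
have /andP[l0 lt] := modtau_bounds (b - a).
have ne' : n1 - n2 != 0 by rewrite subr_eq0.
split.
- have := @gap_lemma (modtau (b - a)) (n1 - n2) (m1 - m2).
  rewrite !intrB; apply; rewrite ?ltW //; first lra.
  rewrite ltr_norml; apply/andP; split; lra.
- by rewrite -intrB -intr_norm ler1z; lia.
Qed.

Lemma Z_cover (a b x : R) : 0 < modtau (b - a) ->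
  exists n : int, Zab a b n /\ `|n%:~R - x| <= 22 / modtau (b - a).
Proof.
move=> l0.
have /andP[_ lt] := modtau_bounds (b - a).
set l := modtau (b - a) in l0 lt *.
have /andP[t1 t2] := tau_bounds.
set n0 := Num.floor x.
have /andP[x1 x2] := floor_bounds x.
set m0 := Num.floor ((n0%:~R - a) / tau).
have /andP[y1 y2] := floor_bounds ((n0%:~R - a) / tau).
have yE : (n0%:~R - a) / tau * tau = n0%:~R - a by rewrite divfK // gt_eqF; lra.
set u0 := n0%:~R - a - m0%:~R * tau.
have U0 : 0 <= u0 < tau by rewrite /u0; apply/andP; split; nra.
have [h [j [/andP[c1 c2] /andP[v1 v2]]]] := @cover_core l (- u0) l0 lt.
exists (n0 + h); split.
- apply/Zab_E; exists (m0 + j); rewrite !intrD.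
  rewrite -/l; apply/andP; split; rewrite /u0 in c1 c2; lra.
- set u := h%:~R - j%:~R * tau in c1 c2.
  set v := h%:~R + j%:~R * alpha in v1 v2.
  have hE : h%:~R * (1 + tau ^+ 2) = u + tau ^+ 2 * v.
    rewrite /u /v (_ : tau ^+ 2 * (h%:~R + j%:~R * alpha) = tau ^+ 2 * h%:~R + j%:~R * tau * (alpha * tau)); last ring.
    rewrite alpha_tau; ring.
  have ts := tau_sq.
  have hb : `|h%:~R : R| <= 2 + v.
    rewrite ler_norml; apply/andP; split; nra.
  have l22 : 3 <= 6 / l.
    rewrite ler_pdivlMr //; lra.
  rewrite intrD.
  have : `|n0%:~R + h%:~R - x| <= `|n0%:~R - x| + `|h%:~R : R|.
    rewrite (_ : n0%:~R + h%:~R - x = (n0%:~R - x) + h%:~R); last ring.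
    exact: ler_normD.
  have : `|n0%:~R - x| <= 1 by rewrite ler_norml; apply/andP; split; lra.
  have -> : 22 / l = 6 / l + 16 / l by rewrite -mulrDl; congr (_ * _); lra.
  lra.
Qed.

Definition rr (m : nat) : R := if (m <= 4)%N then 1 else ((m%:R - 2) ^+ 2)^-1.

Lemma rr_ge0 m : 0 <= rr m.
Proof. by rewrite /rr; case: ifP => _ //; rewrite invr_ge0 sqr_ge0. Qed.

Lemma rr_le1 m : rr m <= 1.
Proof.
rewrite /rr; case: ifP => // /negbT; rewrite -ltnNge => m4.
have m5 : (5%:R : R) <= m%:R by rewrite ler_nat.
have h1 : 1 <= m%:R - 2 :> R by lra.
rewrite invf_le1; first by apply: exprn_ege1.
by rewrite exprn_gt0 //; lra.
Qed.

Lemma rr_psum n : \sum_(0 <= i < n) rr i <= 6.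
Proof.
case: (leqP n 5) => hn.
  apply: (le_trans (y := \sum_(0 <= i < n) (1 : R))).
    by apply: ler_sum => i _; exact: rr_le1.
  rewrite sumr_const_nat subn0.
  have : (n%:R : R) <= 5%:R by rewrite ler_nat.
  rewrite -[_ *+ n]mulr_natr mul1r; lra.
have [p ->] : exists p, n = (p + 5)%N by exists (n - 5)%N; lia.
suff : \sum_(0 <= i < p + 5) rr i <= 6 - (p%:R + 2)^-1.
  have p0 : 0 <= p%:R :> R := ler0n _ _.
  have : 0 <= (p%:R + 2 : R)^-1 by rewrite invr_ge0; lra.
  lra.
elim: p => [|p IH].
  apply: (le_trans (y := \sum_(0 <= i < 0 + 5) (1 : R))).
    by apply: ler_sum => i _; exact: rr_le1.
  rewrite sumr_const_nat subn0 add0r -[_ *+ _]mulr_natr mul1r.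
  have -> : (0 + 5)%N = 5%N by []. 
  rewrite (_ : (2 : R)^-1 = 1/2); last by rewrite div1r.
  lra.
rewrite (_ : (p.+1 + 5)%N = (p + 5).+1); last lia.
rewrite big_nat_recr //=.
have -> : rr (p + 5) = ((p%:R + 3) ^+ 2)^-1.
  rewrite /rr; case: ifP => [|_]; first lia.
  by rewrite natrD (_ : (5%:R : R) = 5) //; congr (_ ^+ 2)^-1; lra.
have p0 : 0 <= p%:R :> R := ler0n _ _.
set y := (p%:R + 2 : R).
have y0 : 0 < y by rewrite /y; lra.
have -> : (p.+1%:R + 2 : R)^-1 = (y + 1)^-1 by rewrite -natr1 /y; congr (_^-1); lra.
have -> : (p%:R + 3 : R) = y + 1 by rewrite /y; lra.
set A := (y + 1)^-1. set B := y^-1.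
have A0 : 0 < A by rewrite /A invr_gt0; lra.
have BA : B - A = B * A.
  rewrite /A /B. field. by apply/andP; split; rewrite gt_eqF //; lra.
have AB : A <= B by rewrite /A /B; apply: inv_le; lra.
have -> : ((y + 1) ^+ 2)^-1 = A * A by rewrite /A expr2 invfM.
rewrite -/y -/B in IH.
have : A * A <= B * A by rewrite ler_pM2r.
lra.
Qed.

Local Open Scope ereal_scope.

Lemma esum_subset_le (T : choiceType) (A B : set T) (f : T -> \bar R) :
  A `<=` B -> (forall x, B x -> 0 <= f x) ->
  \esum_(i in A) f i <= \esum_(i in B) f i.
Proof.
move=> AB f0.
apply: ge_ereal_sup => _ [X [finX XA] <-].
apply: esum_ge; exists X => //; split => //.
exact: subset_trans XA AB.
Qed.

Lemma series_rr_le (c : R) : (0 <= c)%R ->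
  \sum_(i <oo) ((c * rr i)%:E) <= (6 * c)%:E.
Proof.
move=> c0.
apply: lime_le.
  by apply: is_cvg_nneseries => i _ _; rewrite lee_fin mulr_ge0 // rr_ge0.
apply: nearW => n.
rewrite sumEFin lee_fin -mulr_sumr mulrC ler_wpM2r //.
exact: rr_psum.
Qed.

Lemma esum_rr_bound (Z : set int) (kap : int -> nat) (F : int -> R) (c : R) :
  (0 <= c)%R -> set_inj Z kap ->
  (forall n, Z n -> (0 <= F n <= c * rr (kap n))%R) ->
  \esum_(n in Z) (F n)%:E <= (6 * c)%:E.
Proof.
move=> c0 inj FB.
apply: (le_trans (y := \esum_(n in Z) (c * rr (kap n))%:E)).
  by apply: le_esum => n Zn; rewrite lee_fin; have /andP[] := FB n Zn.
rewrite -(esum_image Z kap (fun m => (c * rr m)%:E)) //.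
apply: (le_trans (y := \esum_(m in [set: nat]) (c * rr m)%:E)).
  apply: esum_subset_le => // m _; by rewrite lee_fin mulr_ge0 // rr_ge0.
rewrite -nneseries_esumT; first exact: series_rr_le.
by move=> m; rewrite lee_fin mulr_ge0 // rr_ge0.
Qed.

Local Close Scope ereal_scope.

Definition enc (f : int) : nat := if (0 <= f)%R then (2 * `|f|)%N else (2 * `|f|).-1.

Lemma enc_inj : injective enc.
Proof.
move=> f1 f2; rewrite /enc.
case: f1 => n1; case: f2 => n2 //=; rewrite ?NegzE /=; lia.
Qed.

Lemma enc_R (f : int) :
  (enc f)%:R = (if (0 <= f)%R then 2 * f%:~R else - 2 * f%:~R - 1 :> R).
Proof.
rewrite /enc; case: f => n.
  by rewrite /= natrM.
have -> : (0 <= Negz n)%R = false by [].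
have -> : (2 * `|Negz n|).-1 = (2 * n + 1)%N by rewrite /=; lia.
rewrite NegzE intrN natrD natrM -natr1 (_ : (n.+1)%:~R = (n%:R + 1 : R)); last by rewrite -[LHS]/(n.+1%:R) -natr1.
lra.
Qed.

Lemma enc_bound (t g0 : R) : 0 < g0 ->
  ((enc (Num.floor (t / g0)))%:R - 2) * g0 <= 2 * `|t|.
Proof.
move=> g0p.
have /andP[f1 f2] := floor_bounds (t / g0).
have tE : t / g0 * g0 = t by rewrite divfK // gt_eqF.
rewrite enc_R.
set f := Num.floor (t / g0) in f1 f2 *.
set y := t / g0 in f1 f2 tE.
case: ifP => hf.
- have f0 : 0 <= f%:~R :> R by rewrite ler0z.
  have ty : 0 <= t by nra.
  rewrite ger0_norm //; nra.
- have f0 : f%:~R <= -1 :> R.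
    have : (f <= -1)%R by move/negbT: hf; rewrite -ltNge; lia.
    by rewrite -(ler_int R) => h; rewrite (le_trans h) //= intrN.
  have ty : t < 0 by nra.
  rewrite ltr0_norm //; nra.
Qed.

Definition C2 : R := 272 * 272.

Lemma key (a b phi : R) : modtau (b - a) != 0 ->
  exists (om : R) (n0 : int) (kap : int -> nat),
    [/\ 0 < om, Zab a b n0, w (n0%:~R - phi) = om, set_inj (Zab a b) kap &
       forall n, Zab a b n -> 0 <= w (n%:~R - phi) <= C2 * om * rr (kap n)].
Proof.
move=> l_ne0.
have /andP[l0' lt] := modtau_bounds (b - a).
have l0 : 0 < modtau (b - a) by rewrite lt_neqAle eq_sym l_ne0.
set l := modtau (b - a) in l0 lt l0' l_ne0 *.
have /andP[t1 t2] := tau_bounds.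
have pi0 := @pi_gt0 R.
pose t (n : int) : R := n%:~R - phi + 1/2.
have [nc [Znc hc]] := Z_cover a b (phi - 1/2) l0.
have tnc : `|t nc| <= 22 / l by rewrite /t (_ : _ - phi + _ = nc%:~R - (phi - 1/2)) //; lra.
pose P := fun k : nat => `[< exists n, Zab a b n /\ `|t n| < k.+1%:R >].
have exP : exists k, P k.
  exists (Num.Def.archi_bound `|t nc|); apply/asboolP; exists nc; split => //.
  have := archi_boundP (normr_ge0 (t nc)).
  set k := Num.Def.archi_bound _ => hk.
  by rewrite (lt_le_trans hk) // ler_nat.
case: (ex_minnP exP) => k /asboolP [ns [Zns hns]] Pmin.
have near : forall n, Zab a b n -> `|t ns| < `|t n| + 1.
  move=> n Zn.
  suff : k%:R <= `|t n| by rewrite -natr1 in hns; lra.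
  rewrite leNgt; apply/negP => hlt.
  have k0 : (0 < k)%N.
    rewrite lt0n; apply/negP => /eqP k0; move: hlt; rewrite k0 ltNge normr_ge0 //.
  have : P k.-1 by apply/asboolP; exists n; split => //; rewrite prednK.
  move/Pmin; lia.
set D : R := `|t ns|.
have D0 : 0 <= D := normr_ge0 _.
have nearD : forall n, Zab a b n -> D < `|t n| + 1 := near.
have Dl : D <= 22 / l + 1 by have := nearD nc Znc; lra.
set g0 := (1 + D) / 68.
have g0p : 0 < g0 by rewrite /g0; lra.
have sep : forall n n', Zab a b n -> Zab a b n' -> n != n' -> g0 <= `|n%:~R - n'%:~R|.
  move=> n n' Zn Zn' ne.
  have [h1 h2] := Z_gap a b n n' Zn Zn' ne.
  set d := `|_| in h1 h2 *.
  have L : 22 / l <= 66 * d.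
    have h1' : 1 <= 3 * l * d := h1.
    rewrite ler_pdivrMr //; nra.
  rewrite /g0; lra.
pose kap := fun n => enc (Num.floor (t n / g0)).
exists (w (ns%:~R - phi)), ns, kap.
have /andP[wl wu] := w_bounds (ns%:~R - phi).
rewrite -/(t ns) in wl wu.
have tD : t ns ^+ 2 = D ^+ 2 by rewrite /D real_normK // num_real.
rewrite tD in wl.
have om0 : 0 < w (ns%:~R - phi).
  apply: lt_le_trans wl; rewrite invr_gt0; nra.
split => //.
- move=> n n' /set_mem Zn /set_mem Zn' /enc_inj E.
  case: (eqVneq n n') => // ne.
  have := sep n n' Zn Zn' ne.
  have /andP[f1 f2] := floor_bounds (t n / g0).
  have /andP[f1' f2'] := floor_bounds (t n' / g0).
  rewrite E in f1 f2.
  have e1 : t n / g0 * g0 = t n by rewrite divfK // gt_eqF.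
  have e2 : t n' / g0 * g0 = t n' by rewrite divfK // gt_eqF.
  have : `|t n - t n'| < g0.
    rewrite ltr_norml; apply/andP; split; nra.
  rewrite /t (_ : n%:~R - phi + 1 / 2 - (n'%:~R - phi + 1 / 2) = n%:~R - n'%:~R); last ring.
  move=> h1 h2; have := lt_le_trans h1 h2; by rewrite ltxx.
- move=> n Zn.
  have /andP[vl vu] := w_bounds (n%:~R - phi).
  rewrite -/(t n) in vl vu.
  have wn0 : 0 <= w (n%:~R - phi).
    apply: le_trans vl; rewrite invr_ge0; nra.
  rewrite wn0 /=.
  set m := kap n.
  have Em := enc_bound (t n) g0 g0p; rewrite -/(kap n) -/m in Em.
  have [T [T0 TE Tm Tr]] : exists T : R, [/\ 0 <= T, T ^+ 2 = t n ^+ 2,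
      (m%:R - 2) * g0 <= 2 * T & D < T + 1].
    exists `|t n|; split; [exact: normr_ge0 | by rewrite real_normK // num_real | exact: Em | exact: nearD].
  pose r' : R := if (m <= 4)%N then 1 else (m%:R - 2) ^+ 2.
  have rrE : rr m = r'^-1 by rewrite /rr /r'; case: ifP; rewrite ?invr1.
  have r'1 : 1 <= r'.
    rewrite /r'; case: ifP => // /negbT; rewrite -ltnNge => m4.
    have : (5%:R : R) <= m%:R by rewrite ler_nat.
    move=> h; apply: exprn_ege1; lra.
  have K : (1 + D ^+ 2) * r' <= 18496 * (1 + t n ^+ 2).
    rewrite -TE /r'; case: ifP => m4.
    - rewrite mulr1.
      have : D ^+ 2 <= (T + 1) ^+ 2 by rewrite ler_sqr ?nnegrE //; lra.
      have := sqr_ge0 (T - 1).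
      rewrite !expr2; nra.
    - move/negbT: m4; rewrite -ltnNge => m4.
      have m5 : (5%:R : R) <= m%:R by rewrite ler_nat.
      have E1 : (m%:R - 2) * (1 + D) <= 136 * T.
        move: Tm; rewrite /g0 mulrA => h.
        have : (m%:R - 2) * (1 + D) / 68 * 68 = (m%:R - 2) * (1 + D) by rewrite divfK.
        lra.
      have E2 : ((m%:R - 2) * (1 + D)) ^+ 2 <= (136 * T) ^+ 2.
        rewrite ler_sqr ?nnegrE //; last lra.
        apply: mulr_ge0; lra.
      rewrite !exprMn in E2.
      have : (1 + D ^+ 2) <= (1 + D) ^+ 2 by rewrite !expr2; lra.
      have mp : 0 <= (m%:R - 2) ^+ 2 :> R by apply: sqr_ge0.
      move=> h.
      have : (m%:R - 2) ^+ 2 * (1 + D ^+ 2) <= (m%:R - 2) ^+ 2 * (1 + D) ^+ 2.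
        by rewrite ler_wpM2l.
      rewrite (_ : (136 : R) ^+ 2 = 18496) in E2; last by rewrite expr2; lra.
      have : 0 <= (m%:R - 2) ^+ 2 * (1 + D ^+ 2) :> R by apply: mulr_ge0 => //; have := sqr_ge0 D; lra.
      rewrite mulrC; lra.
  apply: (le_trans vu); rewrite rrE.
  have C20 : 0 < C2 by rewrite /C2; lra.
  apply: (le_trans (y := C2 * (2 * pi * (1 + D ^+ 2))^-1 * r'^-1)); last first.
    have rinv0 : 0 <= r'^-1 by rewrite invr_ge0; lra.
    rewrite ler_wpM2r // ler_wpM2l ?(ltW C20) //.
  have -> : C2 * (2 * pi * (1 + D ^+ 2))^-1 * r'^-1 = (2 * pi * (1 + D ^+ 2) * r' / C2)^-1.
    have gen : forall x y c : R, x != 0 -> y != 0 -> c != 0 -> c * x^-1 * y^-1 = (x * y / c)^-1.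
      by move=> x y c x0 y0 c0; field; rewrite x0 y0 c0.
    by apply: gen; rewrite gt_eqF //; nra.
  have D2 : 0 < 1 + D ^+ 2 by have := sqr_ge0 D; lra.
  apply: inv_le.
    apply: divr_gt0 => //; apply: mulr_gt0; last lra.
    by apply: mulr_gt0 => //; lra.
  rewrite ler_pdivrMr //.
  have := ler_wpM2l (ltW pi0) K.
  rewrite /C2; lra.
Qed.


Lemma powR_split (x p : R) : 0 <= x -> 0 < p -> x `^ (p + 1) = x `^ p * x.
Proof.
move=> x0 p0; rewrite powRD ?powRr1 //.
by apply/implyP => /eqP h; exfalso; lra.
Qed.

Lemma powR_mono (x y p : R) : 0 <= x -> x <= y -> 0 <= p -> x `^ p <= y `^ p.
Proof.
move=> x0 xy p0; apply: ge0_ler_powR => //; rewrite nnegrE //; lra.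
Qed.

Lemma fine_bounds (E : \bar R) (L U : R) : (L%:E <= E)%E -> (E <= U%:E)%E ->
  L <= fine E <= U.
Proof. by case: E => [x| |] //= h1 h2; rewrite -!lee_fin h1 h2. Qed.

Lemma esum_single (Z : set int) (n0 : int) (f : int -> R) :
  Z n0 -> (forall n, Z n -> 0 <= f n) -> ((f n0)%:E <= \esum_(n in Z) (f n)%:E)%E.
Proof.
move=> Zn0 f0; apply: esum_ge; exists [set n0].
  split; first exact: finite_set1.
  by move=> x ->.
by rewrite fsbig_set1.
Qed.

Lemma main_R : exists C : R, 0 < C /\
    forall a b phi : R, modtau (b - a) != 0 ->
      fine (Wsum a b phi (3 / 2)) <=
      C * (fine (Wsum a b phi (5 / 2)) / fine (Wsum a b phi 1)).
Proof.
have C20 : 0 < C2 by rewrite /C2; lra.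
set s := C2 `^ (1/2).
have s0 : 0 < s by apply: powR_gt0.
exists (36 * C2 * C2 * s); split; first by rewrite !mulr_gt0 //; lra.
move=> a b phi hl.
have [om [n0 [kap [om0 Zn0 wn0 inj B]]]] := key a b phi hl.
set r := om `^ (1/2).
have r0 : 0 < r by apply: powR_gt0.
have p1 : (0 : R) < 1/2 by lra.
have p32 : (0 : R) < 1/2 + 1 by lra.
have e32 : (3/2 : R) = 1/2 + 1 by lra.
have e52 : (5/2 : R) = 3/2 + 1 by lra.
have sr : (C2 * om) `^ (1/2) = s * r by rewrite powRM //; lra.
have c1 : 0 < C2 * om by rewrite mulr_gt0.
have c2 : 0 < s * r * (C2 * om) by rewrite !mulr_gt0.
have c3 : 0 < s * r * (C2 * om) * (C2 * om) by rewrite !mulr_gt0.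
have Bw : forall n, Zab a b n -> 0 <= w (n%:~R - phi) <= C2 * om.
  move=> n Zn; have /andP[h1 h2] := B n Zn; rewrite h1 /=.
  apply: (le_trans h2); rewrite -[X in _ <= X]mulr1 ler_wpM2l ?rr_le1 //.
  by rewrite mulr_ge0 // ltW.
have [L1 U1] : (om%:E <= Wsum a b phi 1)%E /\ (Wsum a b phi 1 <= (6 * (C2 * om))%:E)%E.
  split.
  - rewrite /Wsum -[X in (X%:E <= _)%E]powRr1; last lra.
    rewrite -wn0; apply: esum_single => // n _; exact: powR_ge0.
  - rewrite /Wsum; apply: esum_rr_bound inj _ => //; first exact: ltW.
    move=> n Zn; have /andP[h1 h2] := B n Zn.
    by rewrite powRr1 // h1 h2.
have U32 : (Wsum a b phi (3/2) <= (6 * (s * r * (C2 * om)))%:E)%E.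
  rewrite /Wsum; apply: esum_rr_bound inj _ => //; first exact: ltW.
  move=> n Zn; have /andP[h1 h2] := B n Zn; have /andP[_ h3] := Bw n Zn.
  rewrite e32 powR_split //.
  apply/andP; split; first by apply: mulr_ge0; [exact: powR_ge0 | exact: h1].
  rewrite -mulrA.
  apply: ler_pM => //; first exact: powR_ge0.
  by rewrite -sr; apply: powR_mono.
have L32 : ((0 : R)%:E <= Wsum a b phi (3/2))%E.
  by apply: esum_ge0 => n _; rewrite lee_fin powR_ge0.
have L52 : ((r * om * om)%:E <= Wsum a b phi (5/2))%E.
  rewrite /Wsum (_ : r * om * om = om `^ (5/2)); last first.
    by rewrite e52 e32 !powR_split //; lra.
  rewrite -wn0; apply: esum_single => // n _; exact: powR_ge0.
have U52 : (Wsum a b phi (5/2) <= (6 * (s * r * (C2 * om) * (C2 * om)))%:E)%E.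
  rewrite /Wsum; apply: esum_rr_bound inj _ => //; first exact: ltW.
  move=> n Zn; have /andP[h1 h2] := B n Zn; have /andP[_ h3] := Bw n Zn.
  rewrite e52 e32 !powR_split //.
  apply/andP; split.
    by apply: mulr_ge0; [apply: mulr_ge0; [exact: powR_ge0 | exact: h1] | exact: h1].
  rewrite [X in _ <= X](_ : _ = (s * r * (C2 * om * rr (kap n))) * (C2 * om)); last ring.
  apply: ler_pM => //; first by apply: mulr_ge0 => //; exact: powR_ge0.
  apply: ler_pM => //; first exact: powR_ge0.
  by rewrite -sr; apply: powR_mono.
have /andP[f1l f1u] := fine_bounds _ _ _ L1 U1.
have /andP[f32l f32u] := fine_bounds _ _ _ L32 U32.
have /andP[f52l f52u] := fine_bounds _ _ _ L52 U52.
set f1 := fine (Wsum a b phi 1) in f1l f1u *.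
set f32 := fine (Wsum a b phi (3/2)) in f32l f32u *.
set f52 := fine (Wsum a b phi (5/2)) in f52l f52u *.
have f10 : 0 < f1 by lra.
rewrite mulrA ler_pdivlMr //.
have h1 : f32 * f1 <= (6 * (s * r * (C2 * om))) * (6 * (C2 * om)).
  by apply: ler_pM => //; lra.
have h2 : 36 * C2 * C2 * s * (r * om * om) <= 36 * C2 * C2 * s * f52.
  by rewrite ler_wpM2l // !mulr_ge0 //; lra.
rewrite (_ : (6 * (s * r * (C2 * om))) * (6 * (C2 * om)) = 36 * C2 * C2 * s * (r * om * om)) in h1; last ring.
lra.
Qed.
End S.

Local Close Scope classical_set_scope.

Theorem corollary14 (R : realType) :
  exists C : R, 0 < C /\
    forall a b phi : R, modtau (b - a) != 0 ->
      fine (Wsum a b phi (3 / 2)) <=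
      C * (fine (Wsum a b phi (5 / 2)) / fine (Wsum a b phi 1)).
Proof. exact: main_R. Qed.
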